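(* Let $\bar x$ be a sparsest solution of problem (P), and let $\tilde X$ be an optimal solution of the QBP program for some $\lambda\ge0$. Suppose that: - $\operatorname{rank}(\tilde X)=1$; - $B$ is $(\epsilon,2\|\tilde X\|_0)$-RIP for some $\epsilon<1$. Then $\tilde X=\begin{bmatrix}1\\ \bar x\end{bmatrix}\begin{bmatrix}1 & \bar x^H\end{bmatrix}$.
   Context: Fix integers $n,N\ge 1$ and data $a_i\in\mathbb{C}$, $b_i,c_i\in\mathbb{C}^n$, $Q_i\in\mathbb{C}^{n\times n}$, $y_i\in\mathbb{C}$ for $i=1,\dots,N$. Problem (P) is $$\min_{x\in\mathbb{C}^n}\|x\|_0\quad\text{subject to}\quad y_i=a_i+b_i^H x+x^H c_i+x^H Q_i x,\quad i=1,\dots,N.$$ Here $\|\cdot\|_0$ counts nonzero entries of a vector or matrix, and ${}^H$ denotes conjugate transpose. Let $\Phi_i=\begin{bmatrix} a_i & b_i^H\\ c_i & Q_i\end{bmatrix}\in\mathbb{C}^{(n+1)\times(n+1)}$. Define the linear operator $B:\mathbb{C}^{(n+1)\times(n+1)}\to\mathbb{C}^N$ by $B(X)=(\operatorname{tr}(\Phi_i X))_{i=1}^N$. The QBP program with parameter $\lambda\ge0$ is $$\min_{X}\ \operatorname{tr}(X)+\lambda\|X\|_1\quad\text{subject to}\quad y_i=\operatorname{tr}(\Phi_i X)\ (i=1,\dots,N),\quad X_{1,1}=1,\quad X\succeq0,$$ where $X$ ranges over Hermitian $(n+1)\times(n+1)$ matrices and $\|X\|_1$ is the sum of the absolute values of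 the entries. $B$ is called $(\epsilon,k)$-RIP if $\left|\frac{\|B(X)\|^2}{\|X\|^2}-1\right|<\epsilon$ for every nonzero $X$ with $\|X\|_0\le k$. In this condition $\|B(X)\|$ is the Euclidean norm in $\mathbb{C}^N$ and $\|X\|$ is the spectral norm. *)

(* Defs.v *)
(* Complex numbers: an arbitrary numClosedFieldType C
   (the complex field is one such). *)
From HB Require Import structures.
From mathcomp Require Import all_boot all_order all_algebra.
Set Implicit Arguments. Unset Strict Implicit. Unset Printing Implicit Defensive.
Import Order.TTheory GRing.Theory Num.Theory.
Local Open Scope ring_scope.

Section Defs.
Variable C : numClosedFieldType.

Definition hadj m p (A : 'M[C]_(m, p)) : 'M[C]_(p, m) := (map_mx Num.conj A)^T.

Definition l0 m p (A : 'M[C]_(m, p)) : nat := #|[set ij : 'I_m * 'I_p | A ij.1 ij.2 != 0]|.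

Definition l1 m p (A : 'M[C]_(m, p)) : C := \sum_(i < m) \sum_(j < p) `|A i j|.

Definition vnorm2 m (v : 'cV[C]_m) : C := \sum_(i < m) `|v i 0| ^+ 2.

Definition fnorm2 N (w : 'I_N -> C) : C := \sum_(i < N) `|w i| ^+ 2.

Definition is_specnorm2 m p (X : 'M[C]_(m, p)) (s : C) : Prop :=
  (forall v : 'cV[C]_p, vnorm2 (X *m v) <= s * vnorm2 v) /\
  (exists2 v : 'cV[C]_p, v != 0 & vnorm2 (X *m v) = s * vnorm2 v).

Definition quadf n (a : C) (b c : 'cV[C]_n) (Q : 'M[C]_n) (x : 'cV[C]_n) : C :=
  a + (hadj b *m x) 0 0 + (hadj x *m c) 0 0 + (hadj x *m Q *m x) 0 0.

Definition P_feasible n N (a : 'I_N -> C) (b c : 'I_N -> 'cV[C]_n)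
  (Q : 'I_N -> 'M[C]_n) (y : 'I_N -> C) (x : 'cV[C]_n) : Prop :=
  forall i, y i = quadf (a i) (b i) (c i) (Q i) x.

Definition P_sparsest n N a b c Q y (x : 'cV[C]_n) : Prop :=
  @P_feasible n N a b c Q y x /\
  forall z, P_feasible a b c Q y z -> (l0 x <= l0 z)%N.

Definition Phi n (a : C) (b c : 'cV[C]_n) (Q : 'M[C]_n) : 'M[C]_(1 + n) :=
  block_mx (a%:M : 'M[C]_1) (hadj b) c Q.

Definition Bop n N (a : 'I_N -> C) (b c : 'I_N -> 'cV[C]_n) (Q : 'I_N -> 'M[C]_n)
  (X : 'M[C]_(1 + n)) : 'I_N -> C :=
  fun i => \tr (Phi (a i) (b i) (c i) (Q i) *m X).

Definition hermitian m (X : 'M[C]_m) : Prop := hadj X = X.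

Definition psd m (X : 'M[C]_m) : Prop :=
  hermitian X /\ forall v : 'cV[C]_m, 0 <= (hadj v *m X *m v) 0 0.

Definition QBP_feasible n N a b c Q (y : 'I_N -> C) (X : 'M[C]_(1 + n)) : Prop :=
  [/\ forall i, y i = @Bop n N a b c Q X i,
      X 0 0 = 1 & psd X].

Definition QBP_obj n (lam : C) (X : 'M[C]_(1 + n)) : C := \tr X + lam * l1 X.

Definition QBP_optimal n N a b c Q y (lam : C) (X : 'M[C]_(1 + n)) : Prop :=
  @QBP_feasible n N a b c Q y X /\
  forall Z, QBP_feasible a b c Q y Z -> QBP_obj lam X <= QBP_obj lam Z.

Definition RIP n N a b c Q (eps : C) (k : nat) : Prop :=
  forall X : 'M[C]_(1 + n), X != 0 -> (l0 X <= k)%N ->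
  forall s, is_specnorm2 X s ->
    `| fnorm2 (@Bop n N a b c Q X) / s - 1 | < eps.

End Defs.

(* Main.v *)
Require Import Defs.
From HB Require Import structures.
From mathcomp Require Import all_boot all_order all_algebra.
From mathcomp Require Import sesquilinear spectral.
Import Order.TTheory GRing.Theory Num.Theory.
Local Open Scope ring_scope.

Section Aux.
Set Implicit Arguments. Unset Strict Implicit.
Variable C : numClosedFieldType.

Lemma hadj_mul m p q (A : 'M[C]_(m, p)) (B : 'M[C]_(p, q)) :
  hadj (A *m B) = hadj B *m hadj A.
Proof. by rewrite /hadj map_mxM trmx_mul. Qed.

Lemma hadjK m p (A : 'M[C]_(m, p)) : hadj (hadj A) = A.
Proof. by apply/matrixP=> i j; rewrite !mxE conjCK. Qed.

Lemma hadjE m p (A : 'M[C]_(m, p)) : hadj A = (A ^t* )%sesqui.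
Proof. by apply/matrixP=> i j; rewrite !mxE. Qed.

Lemma vnorm2E m (v : 'cV[C]_m) : vnorm2 v = (hadj v *m v) 0 0.
Proof.
rewrite /vnorm2 !mxE; apply: eq_bigr => i _.
by rewrite !mxE normCKC.
Qed.

Lemma vnorm2_ge0 m (v : 'cV[C]_m) : 0 <= vnorm2 v.
Proof. by apply: sumr_ge0 => i _; rewrite exprn_ge0. Qed.

Lemma diag_form m (d : 'rV[C]_m) (w : 'cV[C]_m) :
  (hadj w *m diag_mx d *m w) 0 0 = \sum_i d 0 i * `|w i 0| ^+ 2.
Proof.
rewrite mul_mx_diag !mxE; apply: eq_bigr => i _.
by rewrite !mxE normCKC mulrCA mulrA.
Qed.

Lemma specnorm_exists m p (D : 'M[C]_(m, p.+1)) : exists s, is_specnorm2 D s.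
Proof.
set A := hadj D *m D.
have Ah : (A ^t* )%sesqui = A by rewrite -hadjE /A hadj_mul hadjK.
have An : A \is normalmx by apply/normalmxP; rewrite Ah.
have /orthomx_spectralP := An.
set P := spectralmx A; set d := spectral_diag A => AE.
have Pu : P *m hadj P = 1%:M by rewrite hadjE; apply/unitarymxP/spectral_unitarymx.
have Pu' : hadj P *m P = 1%:M by apply: mulmx1C.
have AE' : A = hadj P *m diag_mx d *m P.
  by rewrite AE invmx_unitary ?spectral_unitarymx // hadjE.
have key1 : forall v, vnorm2 (D *m v) = \sum_i d 0 i * `|(P *m v) i 0| ^+ 2.
  move=> v; rewrite vnorm2E -diag_form hadj_mul !mulmxA -(mulmxA _ _ D) -/A AE'.
  by rewrite hadj_mul !mulmxA.
have key2 : forall v, vnorm2 v = vnorm2 (P *m v).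
  by move=> v; rewrite !vnorm2E hadj_mul -mulmxA (mulmxA _ P) Pu' mul1mx.
pose e (i : 'I_p.+1) : 'cV[C]_p.+1 := delta_mx i 0.
have Pe : forall i, P *m (hadj P *m e i) = e i by move=> i; rewrite mulmxA Pu mul1mx.
have de : forall i, d 0 i = vnorm2 (D *m (hadj P *m e i)).
  move=> i; rewrite key1 Pe (bigD1 i) //= big1 ?addr0.
    by rewrite !mxE !eqxx /= normr1 expr1n mulr1.
  by move=> j ji; rewrite !mxE (negbTE ji) /= normr0 expr0n mulr0.
have d0 : forall i, 0 <= d 0 i by move=> i; rewrite de vnorm2_ge0.
have [i0 Hi0] : exists i0, forall j, d 0 j <= d 0 i0.
  have : forall s : seq 'I_p.+1, exists i0, forall j, j \in s -> d 0 j <= d 0 i0.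
    elim=> [|k s [i0 IH]]; first by exists ord0.
    have := real_leVge (ger0_real (d0 k)) (ger0_real (d0 i0)).
    case/orP=> H.
    - exists i0 => j; rewrite inE => /orP[/eqP->//|/IH//].
    - exists k => j; rewrite inE => /orP[/eqP->//|/IH H2].
      exact: le_trans H2 H.
  move=> /(_ (enum 'I_p.+1)) [i0 H]; exists i0 => j; apply: H; by rewrite mem_enum.
exists (d 0 i0); split.
  move=> v; rewrite key1 key2 /vnorm2 mulr_sumr; apply: ler_sum => i _.
  by apply: ler_wpM2r; [rewrite exprn_ge0|exact: Hi0].
exists (hadj P *m e i0).
  apply/eqP => H; have := key2 (hadj P *m e i0).
  rewrite Pe H /vnorm2 big1; last by move=> i _; rewrite mxE normr0 expr0n.
  rewrite (bigD1 i0) //= !mxE !eqxx /= normr1 expr1n => /eqP.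
  rewrite eq_sym paddr_eq0 ?oner_eq0 //; apply: sumr_ge0 => i _; exact: exprn_ge0.
rewrite -de key2 Pe /vnorm2 (bigD1 i0) //= big1 ?addr0.
  by rewrite !mxE !eqxx /= normr1 expr1n mulr1.
by move=> j ji; rewrite !mxE (negbTE ji) /= normr0 expr0n.
Qed.

Lemma hadj_col m1 m2 p (A : 'M[C]_(m1, p)) (B : 'M[C]_(m2, p)) :
  hadj (col_mx A B) = row_mx (hadj A) (hadj B).
Proof. by rewrite /hadj map_col_mx tr_col_mx. Qed.

Lemma hadj1 : hadj (1%:M : 'M[C]_1) = 1%:M.
Proof. by apply/matrixP=> i j; rewrite !mxE !ord1 /= conjC1. Qed.

Lemma quad_tr n (a : C) (b c : 'cV[C]_n) (Q : 'M[C]_n) (x : 'cV[C]_n) :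
  \tr (Phi a b c Q *m (col_mx 1%:M x *m hadj (col_mx 1%:M x))) = quadf a b c Q x.
Proof.
rewrite mulmxA mxtrace_mulC trace_mx11 hadj_col hadj1 /Phi.
rewrite mulmxA mul_row_block !mul1mx mul_row_col mulmx1.
rewrite /quadf !mxE eqxx mulr1n.
have -> : \sum_j (hadj b + hadj x *m Q) 0 j * x j 0 =
   \sum_j (hadj b 0 j * x j 0) + \sum_j ((hadj x *m Q) 0 j * x j 0).
  by rewrite -big_split; apply: eq_bigr => j _; rewrite mxE mulrDl.
rewrite -!addrA; congr (_ + _); rewrite addrC -!addrA; congr (_ + _).
by rewrite addrC.
Qed.

Definition supp m (v : 'cV[C]_m) := [set i | v i 0 != 0].

Lemma l0_col m (v : 'cV[C]_m) : l0 v = #|supp v|.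
Proof.
rewrite /l0; transitivity #|setX (supp v) [set: 'I_1]|; last first.
  by rewrite cardsX cardsT card_ord muln1.
apply: eq_card => -[i j]; rewrite !inE ord1 /= andbT.
by [].
Qed.

Lemma l0_outer m (v : 'cV[C]_m) : l0 (v *m hadj v) = (#|supp v| * #|supp v|)%N.
Proof.
rewrite -cardsX /l0; apply: eq_card => -[i j]; rewrite !inE /=.
rewrite !mxE big_ord1 !mxE mulf_eq0 negb_or conjC_eq0.
by [].
Qed.

Lemma supp_col1 n (x : 'cV[C]_n) :
  #|supp (col_mx (1%:M : 'M[C]_1) x)| = (1 + #|supp x|)%N.
Proof.
rewrite -!sum1_card big_split_ord /=; congr (_ + _)%N.
  rewrite big_mkcond big_ord1 inE col_mxEu !mxE eqxx /= oner_eq0 /= //.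
by apply: eq_bigl => i; rewrite !inE col_mxEd.
Qed.

Lemma l0_sub m p (A B : 'M[C]_(m, p)) : (l0 (A - B) <= l0 A + l0 B)%N.
Proof.
apply: leq_trans (leq_card_setU _ _); apply: subset_leq_card.
apply/subsetP => -[i j]; rewrite !inE /= !mxE.
case: (eqVneq (A i j) 0) => [->|//]; rewrite sub0r oppr_eq0 => ->.
by rewrite orbT.
Qed.

Lemma rank1_outer n (X : 'M[C]_(1 + n)) :
  Defs.hermitian X -> X 0 0 = 1 -> \rank X = 1%N ->
  X = col 0 X *m hadj (col 0 X).
Proof.
move=> hX X00 rX.
have r0 : (row 0 X != 0).
  by apply/eqP => /matrixP /(_ 0 0); rewrite !mxE X00 => /eqP; rewrite oner_eq0.
have eq0 : (row 0 X == X)%MS.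
  by rewrite -mxrank_leqif_eq ?row_sub // rank_rV r0 rX.
have hc : forall j : 'I_(1 + n), X 0 j = (X j 0)^*.
  by move=> j; rewrite -{1}hX !mxE.
apply/matrixP => i j.
have /sub_rVP [k Hk] : (row i X <= row 0 X)%MS.
  by rewrite (eqmxP eq0) row_sub.
move/matrixP: Hk => Hk.
have Hij : X i j = k * X 0 j by have := Hk 0 j; rewrite !mxE.
have Hi0 : X i 0 = k by have := Hk 0 0; rewrite !mxE X00 mulr1.
rewrite !mxE big_ord1 !mxE -(hc j) Hij Hi0.
by [].
Qed.

End Aux.
Theorem mainTheorem3 (C : numClosedFieldType) (n N : nat)
  (a : 'I_N -> C) (b c : 'I_N -> 'cV[C]_n) (Q : 'I_N -> 'M[C]_n) (y : 'I_N -> C)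
  (xbar : 'cV[C]_n) (Xt : 'M[C]_(1 + n)) (lam eps : C) :
  (0 < n)%N -> (0 < N)%N ->
  P_sparsest a b c Q y xbar ->
  0 <= lam ->
  QBP_optimal a b c Q y lam Xt ->
  \rank Xt = 1%N ->
  eps < 1 ->
  RIP a b c Q eps (2 * l0 Xt) ->
  Xt = col_mx (1%:M : 'M[C]_1) xbar *m hadj (col_mx (1%:M : 'M[C]_1) xbar).
Proof.
move=> _ _ [feasb minb] _ [[yXt X00 [hX _]] _] rX eps1 rip.
have XtE := rank1_outer hX X00 rX.
set u := col 0 Xt in XtE.
set x := dsubmx u.
have uE : u = col_mx 1%:M x.
  rewrite -[u]vsubmxK; congr col_mx; apply/matrixP => i j.
  rewrite !ord1 !mxE /=.
  have -> : lshift n (0 : 'I_1) = 0 by apply: val_inj.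
  by rewrite X00.
have XtE' : Xt = col_mx 1%:M x *m hadj (col_mx 1%:M x) by rewrite {1}XtE uE.
have feasx : P_feasible a b c Q y x.
  by move=> i; rewrite yXt /Bop XtE' quad_tr.
have lx := minb x feasx.
set Xb := col_mx 1%:M xbar *m hadj (col_mx 1%:M xbar).
have BD : forall i, Bop a b c Q (Xt - Xb) i = 0.
  move=> i; rewrite /Bop mulmxBr linearB /= XtE' /Xb !quad_tr -feasb -feasx.
  by rewrite subrr.
have l0D : (l0 (Xt - Xb) <= 2 * l0 Xt)%N.
  apply: leq_trans (l0_sub _ _) _.
  rewrite mul2n -addnn leq_add2l /Xb XtE' !l0_outer !supp_col1.
  rewrite !l0_col in lx.
  by apply: leq_mul; rewrite leq_add2l.
apply/eqP; rewrite -subr_eq0; apply/negPn/negP => D0.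
have [s Hs] := @specnorm_exists C (1 + n) n (Xt - Xb).
have := rip _ D0 l0D s Hs.
rewrite /fnorm2 big1 => [|i _]; last by rewrite BD normr0 expr0n.
rewrite mul0r sub0r normrN normr1 => H.
by have := lt_trans H eps1; rewrite ltxx.
Qed.
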